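(* Let $X,Y$ be vector spaces in separating duality, $X$ with $\sigma(X,Y)$. Let $f:X\to(-\infty,+\infty]$ be convex, lower semicontinuous, with $\mathrm{dom}\,f$ contained in a compact set, and let $V\subset X$ be closed and convex. If $V\cap\mathrm{dom}\,f\ne\emptyset$ or $V\cap\mathrm{cl}\,\mathrm{dom}\,f=\emptyset$, then $$\inf_{x\in V}f(x)=-\inf_{y\in Y}\big(f^*(y)+\xi_V^*(-y)\big)\in(-\infty,\infty].$$ If $V$ satisfies neither condition, then for every closed convex $W\subset\mathrm{int}\,V$, $$\inf_{x\in W}f(x)=-\inf_{y\in Y}\big(f^*(y)+\xi_W^*(-y)\big)=+\infty.$$
   Context: $\xi_C$: convex indicator of $C$ ($0$ on $C$, $+\infty$ outside); $\xi_C^*(y)=\sup_{x\in C}\langle x,y\rangle$ its support function. $f^*(y)=\sup_x\{\langle x,y\rangle-f(x)\}$. $\mathrm{dom}\,f=\{f<\infty\}$. *)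

(* Defs.v *)
From Stdlib Require Import Reals Lra List ClassicalEpsilon.
Open Scope R_scope.

Record VS := {
  car :> Type;
  vadd : car -> car -> car;
  vscal : R -> car -> car;
  vzero : car;
  vopp : car -> car;
  vaddA : forall x y z, vadd x (vadd y z) = vadd (vadd x y) z;
  vaddC : forall x y, vadd x y = vadd y x;
  vadd0 : forall x, vadd x vzero = x;
  vaddN : forall x, vadd x (vopp x) = vzero;
  vscal1 : forall x, vscal 1 x = x;
  vscalA : forall a b x, vscal a (vscal b x) = vscal (a * b) x;
  vscalDr : forall a x y, vscal a (vadd x y) = vadd (vscal a x) (vscal a y);
  vscalDl : forall a b x, vscal (a + b) x = vadd (vscal a x) (vscal b x)
}.
Arguments vadd {_}. Arguments vscal {_}. Arguments vzero {_}. Arguments vopp {_}.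

Record Duality (X Y : VS) := {
  pair : X -> Y -> R;
  pair_addl : forall x x' y, pair (vadd x x') y = pair x y + pair x' y;
  pair_scall : forall a x y, pair (vscal a x) y = a * pair x y;
  pair_addr : forall x y y', pair x (vadd y y') = pair x y + pair x y';
  pair_scalr : forall a x y, pair x (vscal a y) = a * pair x y;
  pair_sepX : forall x, (forall y, pair x y = 0) -> x = vzero;
  pair_sepY : forall y, (forall x, pair x y = 0) -> y = vzero
}.
Arguments pair {_ _}.

Section Weak.
Context {X Y : VS} (D : Duality X Y).

Definition wopen (U : X -> Prop) : Prop :=
  forall x, U x -> exists (ys : list Y) (eps : R), 0 < eps /\
    forall z, (forall y, In y ys -> Rabs (pair D (vadd z (vopp x)) y) < eps) -> U z.

Definition wclosed (C : X -> Prop) : Prop := wopen (fun x => ~ C x).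

Definition wcompact (K : X -> Prop) : Prop :=
  forall (I : Type) (U : I -> X -> Prop),
    (forall i, wopen (U i)) -> (forall x, K x -> exists i, U i x) ->
    exists l : list I, forall x, K x -> exists i, In i l /\ U i x.

Definition winterior (A : X -> Prop) (x : X) : Prop :=
  exists U, wopen U /\ U x /\ forall z, U z -> A z.

Definition wclosure (A : X -> Prop) (x : X) : Prop :=
  forall U, wopen U -> U x -> exists z, U z /\ A z.
End Weak.

Definition convex_set {X : VS} (C : X -> Prop) : Prop :=
  forall x z t, 0 <= t <= 1 -> C x -> C z -> C (vadd (vscal t x) (vscal (1 - t) z)).

Inductive ereal := Fin (r : R) | PInf | NInf.

Definition ele (a b : ereal) : Prop :=
  match a, b with
  | NInf, _ => True
  | _, PInf => True
  | Fin x, Fin y => x <= y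
  | _, _ => False
  end.

Definition Eopp (a : ereal) : ereal :=
  match a with Fin x => Fin (- x) | PInf => NInf | NInf => PInf end.

(* addition; the convention chosen for the undefined sum is
   (+oo) + (-oo) = (-oo) + (+oo) = -oo (it never arises in the theorem) *)
Definition Eplus (a b : ereal) : ereal :=
  match a, b with
  | Fin x, Fin y => Fin (x + y)
  | NInf, _ | _, NInf => NInf
  | _, _ => PInf
  end.

Definition is_Esup (S : ereal -> Prop) (s : ereal) : Prop :=
  (forall e, S e -> ele e s) /\ (forall u, (forall e, S e -> ele e u) -> ele s u).
Definition is_Einf (S : ereal -> Prop) (s : ereal) : Prop :=
  (forall e, S e -> ele s e) /\ (forall u, (forall e, S e -> ele u e) -> ele u s).

(* supremum / infimum of a set of extended reals (they always exist; the
   definition uses Hilbert's epsilon) *)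
Definition Esup (S : ereal -> Prop) : ereal := epsilon (inhabits NInf) (is_Esup S).
Definition Einf (S : ereal -> Prop) : ereal := epsilon (inhabits PInf) (is_Einf S).

Definition dom {X : VS} (f : X -> ereal) (x : X) : Prop := f x <> PInf.

Definition convex_fun {X : VS} (f : X -> ereal) : Prop :=
  forall x z t a b, 0 <= t <= 1 -> f x = Fin a -> f z = Fin b ->
    ele (f (vadd (vscal t x) (vscal (1 - t) z))) (Fin (t * a + (1 - t) * b)).

Definition wlsc {X Y : VS} (D : Duality X Y) (f : X -> ereal) : Prop :=
  forall r : R, wclosed D (fun x => ele (f x) (Fin r)).

Definition inf_over {T : Type} (A : T -> Prop) (g : T -> ereal) : ereal :=
  Einf (fun e => exists x, A x /\ e = g x).

Definition conjugate {X Y : VS} (D : Duality X Y) (f : X -> ereal) (y : Y) : ereal :=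
  Esup (fun e => exists x, e = Eplus (Fin (pair D x y)) (Eopp (f x))).

(* support function xi_C^*(y) = sup_{x in C} <x,y>, the conjugate of the indicator *)
Definition support {X Y : VS} (D : Duality X Y) (C : X -> Prop) (y : Y) : ereal :=
  Esup (fun e => exists x, C x /\ e = Fin (pair D x y)).

(* Main.v *)
Require Import Defs.
From Stdlib Require Import Reals Lra List Classical ClassicalEpsilon Lia ZArith.
Local Open Scope R_scope.

Lemma ele_refl a : ele a a.
Proof. destruct a; simpl; auto; lra. Qed.
Lemma ele_trans a b c : ele a b -> ele b c -> ele a c.
Proof. destruct a, b, c; simpl; intros; auto; try lra; contradiction. Qed.
Lemma ele_antisym a b : ele a b -> ele b a -> a = b.
Proof. destruct a, b; simpl; intros; try contradiction; auto. f_equal; lra. Qed.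
Lemma ele_opp a b : ele a b -> ele (Eopp b) (Eopp a).
Proof. destruct a, b; simpl; auto; lra. Qed.
Lemma Eopp_inv a : Eopp (Eopp a) = a.
Proof. destruct a; simpl; auto; f_equal; ring. Qed.
Lemma Eplus_mono a b c d : ele a c -> ele b d -> ele (Eplus a b) (Eplus c d).
Proof. destruct a, b, c, d; simpl; intros; auto; try lra; try contradiction. Qed.
Lemma ele_PInf a : ele a PInf.
Proof. destruct a; simpl; auto. Qed.
Lemma ele_NInf a : ele NInf a.
Proof. simpl; auto. Qed.

Lemma Esup_exists (S : ereal -> Prop) : exists s, is_Esup S s.
Proof.
  destruct (classic (S PInf)) as [HP|HP].
  - exists PInf. split. intros e _; apply ele_PInf. intros u Hu. apply Hu; auto.
  - destruct (classic (exists r, S (Fin r))) as [[r0 Hr0]|HF].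
    + destruct (classic (exists b, forall r, S (Fin r) -> r <= b)) as [[b Hb]|HB].
      * destruct (completeness (fun r => S (Fin r))) as [m [Hm1 Hm2]].
        { exists b; intros x Hx; auto. }
        { exists r0; auto. }
        exists (Fin m). split.
        -- intros [r| |] He; simpl; auto.
        -- intros u Hu. destruct u as [r| |].
           ++ simpl. apply Hm2. intros x Hx. specialize (Hu _ Hx). simpl in Hu. auto.
           ++ simpl; auto.
           ++ specialize (Hu _ Hr0). simpl in Hu. contradiction.
      * exists PInf. split. intros e _; apply ele_PInf.
        intros u Hu. destruct u as [r| |]; simpl; auto.
        -- apply HB; exists r; intros x Hx; apply (Hu _ Hx).
        -- apply (Hu _ Hr0).
    + exists NInf. split.
      * intros [r| |] He; simpl; auto. apply HF; eauto.
      * intros u Hu; simpl; auto.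
Qed.

Lemma Einf_exists (S : ereal -> Prop) : exists s, is_Einf S s.
Proof.
  destruct (Esup_exists (fun e => S (Eopp e))) as [s [H1 H2]].
  exists (Eopp s). split.
  - intros e He. rewrite <- (Eopp_inv e). apply ele_opp. apply H1. rewrite Eopp_inv; auto.
  - intros u Hu. rewrite <- (Eopp_inv u). apply ele_opp. apply H2.
    intros e He. rewrite <- (Eopp_inv e). apply ele_opp. apply Hu; auto.
Qed.

Lemma Esup_spec S : is_Esup S (Esup S).
Proof. unfold Esup. apply epsilon_spec. apply Esup_exists. Qed.
Lemma Einf_spec S : is_Einf S (Einf S).
Proof. unfold Einf. apply epsilon_spec. apply Einf_exists. Qed.
Lemma Esup_ub S e : S e -> ele e (Esup S).
Proof. intros; apply (proj1 (Esup_spec S)); auto. Qed.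
Lemma Esup_least S u : (forall e, S e -> ele e u) -> ele (Esup S) u.
Proof. intros; apply (proj2 (Esup_spec S)); auto. Qed.
Lemma Einf_lb S e : S e -> ele (Einf S) e.
Proof. intros; apply (proj1 (Einf_spec S)); auto. Qed.
Lemma Einf_greatest S u : (forall e, S e -> ele u e) -> ele u (Einf S).
Proof. intros; apply (proj2 (Einf_spec S)); auto. Qed.
Lemma Einf_unique S s : is_Einf S s -> Einf S = s.
Proof.
  intros [H1 H2]. apply ele_antisym.
  - apply H2. intros; apply Einf_lb; auto.
  - apply Einf_greatest; auto.
Qed.

Lemma real_sup (P : R -> Prop) (r0 b : R) : P r0 -> (forall r, P r -> r <= b) ->
  exists s, (forall r, P r -> r <= s) /\ (forall c, (forall r, P r -> r <= c) -> s <= c).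
Proof.
  intros H0 Hb. destruct (completeness P) as [m [Hm1 Hm2]].
  exists b; intros x Hx; auto. exists r0; auto.
  exists m; split; auto.
Qed.

Fixpoint sumn (n : nat) (f : nat -> R) : R :=
  match n with O => 0 | S k => sumn k f + f k end.

Lemma sumn_ext n f g : (forall i, (i < n)%nat -> f i = g i) -> sumn n f = sumn n g.
Proof. induction n; simpl; intros H; auto. f_equal. apply IHn; intros; apply H; lia. apply H; lia. Qed.
Lemma sumn_plus n f g : sumn n (fun i => f i + g i) = sumn n f + sumn n g.
Proof. induction n; simpl; [ring|]. rewrite IHn; ring. Qed.
Lemma sumn_scal n c f : sumn n (fun i => c * f i) = c * sumn n f.
Proof. induction n; simpl; [ring|]. rewrite IHn; ring. Qed.
Lemma sumn_nonneg n f : (forall i, (i < n)%nat -> 0 <= f i) -> 0 <= sumn n f.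
Proof. induction n; simpl; intros H; [lra|]. assert (0 <= f n) by (apply H; lia).
  assert (0 <= sumn n f) by (apply IHn; intros; apply H; lia). lra. Qed.
Lemma sumn_term n f i : (forall j, (j < n)%nat -> 0 <= f j) -> (i < n)%nat -> f i <= sumn n f.
Proof. induction n; simpl; intros H Hi; [lia|].
  assert (0 <= f n) by (apply H; lia).
  assert (0 <= sumn n f) by (apply sumn_nonneg; intros; apply H; lia).
  destruct (Nat.eq_dec i n); [subst; lra|].
  assert (f i <= sumn n f) by (apply IHn; [intros; apply H; lia | lia]). lra. Qed.
Lemma sumn_zero n f : (forall i, (i < n)%nat -> f i = 0) -> sumn n f = 0.
Proof. induction n; simpl; intros H; auto. rewrite IHn. rewrite H. ring. lia. intros; apply H; lia. Qed.

Lemma cv_const c : Un_cv (fun _ => c) c.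
Proof. intros e He. exists O. intros. unfold Rdist. rewrite Rminus_diag, Rabs_R0; auto. Qed.

Lemma sumn_cv n (a : nat -> nat -> R) (l : nat -> R) :
  (forall i, (i < n)%nat -> Un_cv (fun k => a k i) (l i)) ->
  Un_cv (fun k => sumn n (a k)) (sumn n l).
Proof.
  induction n; simpl; intros H. apply cv_const.
  apply CV_plus. apply IHn; intros; apply H; lia. apply H; lia.
Qed.

Lemma cv_ge (a : nat -> R) l c : Un_cv a l -> (forall k, c <= a k) -> c <= l.
Proof.
  intros Hc Hk. destruct (Rle_or_lt c l); auto.
  destruct (Hc (c - l)) as [N HN]; [lra|].
  specialize (HN N (le_n _)). specialize (Hk N). unfold Rdist in HN.
  apply Rabs_def2 in HN. lra.
Qed.

Lemma quad_lemma A B : 0 <= B -> (forall t, 0 < t <= 1 -> 0 <= 2*t*A + t*t*B) -> 0 <= A.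
Proof.
  intros HB H. destruct (Rle_or_lt 0 A); auto.
  set (t := - A / (B - A)).
  assert (Hd : 0 < B - A) by lra.
  assert (Ht0 : 0 < t) by (unfold t; apply Rdiv_lt_0_compat; lra).
  assert (Ht1 : t <= 1).
  { unfold t. apply (Rmult_le_reg_r (B - A)); auto. field_simplify; lra. }
  assert (HtB : t * B <= - A).
  { unfold t. apply (Rmult_le_reg_r (B - A)); auto. field_simplify; try lra. nra. }
  specialize (H t (conj Ht0 Ht1)). nra.
Qed.

Definition normsq n (u : nat -> R) := sumn n (fun i => u i * u i).
Definition comb (t : R) (u w : nat -> R) := fun i => t * u i + (1 - t) * w i.

Lemma gsep (n : nat) (S : (nat -> R) -> Prop) (eps : R) :
  0 < eps ->
  (forall u w t, 0 <= t <= 1 -> S u -> S w -> S (comb t u w)) ->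
  (forall u, S u -> exists i, (i < n)%nat /\ eps <= Rabs (u i)) ->
  exists lam delta, 0 < delta /\ forall u, S u -> sumn n (fun i => lam i * u i) + delta <= 0.
Proof.
  intros Heps Hconv Hgap.
  destruct (classic (exists u, S u)) as [[u0 Hu0]|Hne].
  2:{ exists (fun _ => 0), 1. split; [lra|]. intros u Hu; exfalso; eauto. }
  assert (Nge : forall u, S u -> eps * eps <= normsq n u).
  { intros u Hu. destruct (Hgap u Hu) as [i [Hi Hei]].
    apply Rle_trans with (u i * u i).
    - unfold Rabs in Hei; destruct (Rcase_abs (u i)); nra.
    - apply (sumn_term n (fun i => u i * u i)); auto. intros; nra. }
  destruct (completeness (fun r => exists u, S u /\ r = - normsq n u)) as [s [Hs1 Hs2]].
  { exists (- (eps*eps)). intros r [u [Hu ->]]. specialize (Nge u Hu). lra. }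
  { exists (- normsq n u0); eauto. }
  set (d := - s).
  assert (Hd1 : forall u, S u -> d <= normsq n u).
  { intros u Hu. assert (- normsq n u <= s) by (apply Hs1; eauto). unfold d; lra. }
  assert (Hd2 : eps * eps <= d).
  { assert (s <= - (eps*eps)). { apply Hs2. intros r [u [Hu ->]]. specialize (Nge u Hu). lra. }
    unfold d; lra. }
  assert (Happ : forall k : nat, exists u, S u /\ normsq n u < d + / (INR k + 1)).
  { intros k. apply NNPP. intros Hn.
    assert (Hh : 0 < / (INR k + 1)) by (apply Rinv_0_lt_compat; pose proof (pos_INR k); lra).
    assert (s <= - (d + / (INR k + 1))).
    { apply Hs2. intros r [u [Hu ->]].
      destruct (Rle_or_lt (d + / (INR k + 1)) (normsq n u)); [lra|].
      exfalso; apply Hn; eauto. }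
    unfold d in *; lra. }
  set (us := fun k => proj1_sig (constructive_indefinite_description _ (Happ k))).
  assert (HusS : forall k, S (us k)).
  { intros k; unfold us; destruct (constructive_indefinite_description _ (Happ k)) as [u [H1 H2]]; auto. }
  assert (HusN : forall k, normsq n (us k) < d + / (INR k + 1)).
  { intros k; unfold us; destruct (constructive_indefinite_description _ (Happ k)) as [u [H1 H2]]; auto. }
  (* parallelogram *)
  assert (Hpar : forall k m i, (i < n)%nat ->
     (us k i - us m i) * (us k i - us m i) <= 2 * / (INR k + 1) + 2 * / (INR m + 1)).
  { intros k m i Hi.
    set (a := us k). set (b := us m).
    assert (Hmid : d <= normsq n (comb (1/2) a b)) by (apply Hd1; apply Hconv; [lra | apply HusS | apply HusS]).
    assert (Hid : normsq n (fun j => a j - b j) =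
       2 * normsq n a + 2 * normsq n b + (-4) * normsq n (comb (1/2) a b)).
    { unfold normsq, comb. rewrite <- !sumn_scal, <- !sumn_plus. apply sumn_ext; intros; field. }
    assert (Ht : (a i - b i) * (a i - b i) <= normsq n (fun j => a j - b j)).
    { apply (sumn_term n (fun j => (a j - b j) * (a j - b j))); [|exact Hi]. intros j Hj. apply Rle_0_sqr. }
    pose proof (HusN k). pose proof (HusN m). fold a b in H, H0. lra. }
  assert (Hinvle : forall k N, (N <= k)%nat -> / (INR k + 1) <= / INR N \/ N = O).
  { intros k N HNk. destruct N; [right; auto|left].
    apply Rinv_le_contravar. apply lt_0_INR; lia. apply le_INR in HNk. lra. }
  assert (Hlim : forall i, exists l, (i < n)%nat -> Un_cv (fun k => us k i) l).
  { intros i. destruct (Nat.lt_ge_cases i n) as [Hi|Hi]; [|exists 0; intros; lia].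
    assert (Hc : Cauchy_crit (fun k => us k i)).
    { intros e He. destruct (archimed_cor1 (e * e / 4)) as [N [HN1 HN2]].
      { assert (0 < e * e) by nra. lra. }
      exists N. intros k m Hk Hm. unfold Rdist.
      pose proof (Hpar k m i Hi).
      destruct (Hinvle k N Hk) as [Hk'|]; [|lia].
      destruct (Hinvle m N Hm) as [Hm'|]; [|lia].
      assert (Hsq : (us k i - us m i) * (us k i - us m i) < e * e) by lra.
      unfold Rabs; destruct (Rcase_abs (us k i - us m i)); nra. }
    destruct (R_complete _ Hc) as [l Hl]. exists l; auto. }
  set (sl := fun i => proj1_sig (constructive_indefinite_description _ (Hlim i))).
  assert (Hsl : forall i, (i < n)%nat -> Un_cv (fun k => us k i) (sl i)).
  { intros i Hi; unfold sl; destruct (constructive_indefinite_description _ (Hlim i)) as [l Hl]; auto. }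
  assert (HNs : normsq n sl = d).
  { apply UL_sequence with (Un := fun k => normsq n (us k)).
    - unfold normsq. apply (sumn_cv n (fun k i => us k i * us k i)).
      intros i Hi. apply CV_mult; apply Hsl; auto.
    - intros e He. destruct (archimed_cor1 e He) as [N [HN1 HN2]].
      exists N. intros k Hk. unfold Rdist.
      pose proof (HusN k). pose proof (Hd1 _ (HusS k)).
      destruct (Hinvle k N Hk) as [Hk'|]; [|lia].
      rewrite Rabs_right; lra. }
  assert (Hineq : forall u, S u -> d <= sumn n (fun i => sl i * u i)).
  { intros u Hu.
    set (A := sumn n (fun i => sl i * (u i - sl i))).
    set (B := normsq n (fun i => u i - sl i)).
    assert (HB : 0 <= B) by (apply sumn_nonneg; intros; apply Rle_0_sqr).
    assert (HA : 0 <= A).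
    { apply (quad_lemma A B HB). intros t Ht.
      assert (Hge : d <= normsq n (comb t u sl)).
      { apply cv_ge with (a := fun k => normsq n (comb t u (us k))).
        - unfold normsq, comb. apply (sumn_cv n (fun k i => (t * u i + (1 - t) * us k i) * (t * u i + (1 - t) * us k i))).
          intros i Hi. apply CV_mult; apply CV_plus; try apply cv_const;
            apply CV_mult; try apply cv_const; apply Hsl; auto.
        - intros k. apply Hd1. apply Hconv; auto. lra. }
      assert (Hexp : normsq n (comb t u sl) = normsq n sl + 2 * t * A + t * t * B).
      { unfold A, B, normsq, comb. rewrite <- !sumn_scal, <- !sumn_plus.
        apply sumn_ext; intros; ring. }
      lra. }
    assert (Hsplit : sumn n (fun i => sl i * u i) = A + normsq n sl).
    { unfold A, normsq. rewrite <- sumn_plus. apply sumn_ext; intros; ring. }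
    lra. }
  exists (fun i => - sl i), d. split; [nra|].
  intros u Hu. specialize (Hineq u Hu).
  assert (sumn n (fun i => - sl i * u i) = (-1) * sumn n (fun i => sl i * u i)).
  { rewrite <- sumn_scal. apply sumn_ext; intros; ring. }
  lra.
Qed.

Lemma nat_gt A : exists n, A < INR n.
Proof.
  destruct (archimed A) as [H1 H2].
  destruct (Z_lt_le_dec (up A) 0) as [Hz|Hz].
  - exists O. simpl. apply IZR_lt in Hz. lra.
  - exists (Z.to_nat (up A)). rewrite INR_IZR_INZ, Z2Nat.id by lia. lra.
Qed.

Definition lmax {T} (h : T -> R) (l : list T) := fold_right (fun t acc => Rmax (h t) acc) 0 l.
Definition lmin {T} (h : T -> R) (l : list T) := fold_right (fun t acc => Rmin (h t) acc) 1 l.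
Lemma lmax_ge {T} (h : T -> R) l t : In t l -> h t <= lmax h l.
Proof. induction l; simpl; intros H; [contradiction|]. destruct H as [<-|H].
  apply Rmax_l. eapply Rle_trans; [apply IHl; auto| apply Rmax_r]. Qed.
Lemma lmax_lt {T} (h : T -> R) l r : 0 < r -> (forall t, In t l -> h t < r) -> lmax h l < r.
Proof. induction l; simpl; intros H0 H; auto. apply Rmax_lub_lt; auto. Qed.
Lemma lmin_le {T} (h : T -> R) l t : In t l -> lmin h l <= h t.
Proof. induction l; simpl; intros H; [contradiction|]. destruct H as [<-|H].
  apply Rmin_l. eapply Rle_trans; [apply Rmin_r| apply IHl; auto]. Qed.
Lemma lmin_pos {T} (h : T -> R) l : (forall t, In t l -> 0 < h t) -> 0 < lmin h l.
Proof. induction l; simpl; intros H; [lra|]. apply Rmin_glb_lt; auto. Qed.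

Section Top.
Variables (X Y : VS) (D : Duality X Y).

Lemma pair0l y : pair D vzero y = 0.
Proof. pose proof (pair_addl X Y D vzero vzero y) as H. rewrite vadd0 in H. lra. Qed.
Lemma pair0r x : pair D x vzero = 0.
Proof. pose proof (pair_addr X Y D x vzero vzero) as H. rewrite vadd0 in H. lra. Qed.
Lemma pair_oppl x y : pair D (vopp x) y = - pair D x y.
Proof. pose proof (pair_addl X Y D x (vopp x) y) as H. rewrite vaddN, pair0l in H. lra. Qed.
Lemma pair_oppr x y : pair D x (vopp y) = - pair D x y.
Proof. pose proof (pair_addr X Y D x y (vopp y)) as H. rewrite vaddN, pair0r in H. lra. Qed.
Lemma pair_subl z a y : pair D (vadd z (vopp a)) y = pair D z y - pair D a y.
Proof. rewrite pair_addl, pair_oppl; ring. Qed.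

Definition ball (a : X) (ys : list Y) (r : R) (z : X) : Prop :=
  forall y, In y ys -> Rabs (pair D z y - pair D a y) < r.

Lemma ball_open a ys r : wopen D (ball a ys r).
Proof.
  intros x Hx. destruct ys as [|y0 ys'].
  { exists nil, 1. split; [lra|]. intros z _ y Hy; destruct Hy. }
  assert (Hr : 0 < r).
  { specialize (Hx y0 (or_introl eq_refl)). pose proof (Rabs_pos (pair D x y0 - pair D a y0)). lra. }
  set (ys := y0 :: ys') in *.
  set (M := lmax (fun y => Rabs (pair D x y - pair D a y)) ys).
  assert (HM : M < r) by (apply lmax_lt; auto).
  exists ys, (r - M). split; [lra|].
  intros z Hz y Hy. specialize (Hz y Hy). rewrite pair_subl in Hz.
  pose proof (lmax_ge (fun y => Rabs (pair D x y - pair D a y)) ys y Hy). fold M in H. simpl in H.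
  replace (pair D z y - pair D a y) with ((pair D z y - pair D x y) + (pair D x y - pair D a y)) by ring.
  eapply Rle_lt_trans; [apply Rabs_triang|]. lra.
Qed.

Lemma compact_cover (K : X -> Prop) (P : X -> list Y -> R -> Prop) :
  wcompact D K -> (forall a, K a -> exists ys r, 0 < r /\ P a ys r) ->
  exists l : list (X * list Y * R),
    (forall t, In t l -> P (fst (fst t)) (snd (fst t)) (snd t) /\ 0 < snd t) /\
    forall x, K x -> exists t, In t l /\ ball (fst (fst t)) (snd (fst t)) (snd t) x.
Proof.
  intros HK HP.
  set (I := {t : X * list Y * R | K (fst (fst t)) /\ P (fst (fst t)) (snd (fst t)) (snd t) /\ 0 < snd t}).
  destruct (HK I (fun i => ball (fst (fst (proj1_sig i))) (snd (fst (proj1_sig i))) (snd (proj1_sig i))))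
    as [l Hl].
  - intros i. apply ball_open.
  - intros x Hx. destruct (HP x Hx) as [ys [r [Hr HPr]]].
    exists (exist _ (x, ys, r) (conj Hx (conj HPr Hr))). simpl.
    intros y _. rewrite Rminus_diag, Rabs_R0; auto.
  - exists (map (@proj1_sig _ _) l). split.
    + intros t Ht. apply in_map_iff in Ht. destruct Ht as [[t' [H1 [H2 H3]]] [<- _]]. simpl; auto.
    + intros x Hx. destruct (Hl x Hx) as [i [Hi Hb]]. exists (proj1_sig i). split; auto.
      apply in_map; auto.
Qed.

Lemma gap (K A V : X -> Prop) :
  wcompact D K -> (forall x, A x -> K x) -> wclosed D V ->
  (forall a, K a -> wclosure D A a -> ~ V a) ->
  exists ys eps, 0 < eps /\ forall x v, A x -> V v ->
    exists y, In y ys /\ eps <= Rabs (pair D x y - pair D v y).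
Proof.
  intros HK HAK HV Hcl.
  destruct (compact_cover K (fun a ys r => (forall z, ball a ys (2*r) z -> ~ A z) \/
                                            (forall z, ball a ys (2*r) z -> ~ V z)) HK)
    as [l [Hl1 Hl2]].
  { intros a Ha. destruct (classic (wclosure D A a)) as [Hc|Hc].
    - specialize (Hcl a Ha Hc). destruct (HV a Hcl) as [ys [e [He Hz]]].
      exists ys, (e/2). split; [lra|]. right. intros z Hb. apply Hz.
      intros y Hy. rewrite pair_subl. specialize (Hb y Hy). lra.
    - unfold wclosure in Hc. apply not_all_ex_not in Hc. destruct Hc as [U Hc].
      apply imply_to_and in Hc. destruct Hc as [HU Hc].
      apply imply_to_and in Hc. destruct Hc as [HUa Hc].
      destruct (HU a HUa) as [ys [e [He Hz]]].
      exists ys, (e/2). split; [lra|]. left. intros z Hb HAz. apply Hc. exists z. split; auto.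
      apply Hz. intros y Hy. rewrite pair_subl. specialize (Hb y Hy). lra. }
  exists (flat_map (fun t => snd (fst t)) l), (lmin snd l). split.
  { apply lmin_pos. intros t Ht; apply (Hl1 t Ht). }
  intros x v Hx Hv.
  destruct (classic (exists y, In y (flat_map (fun t => snd (fst t)) l) /\
                     lmin snd l <= Rabs (pair D x y - pair D v y))) as [H|H]; auto.
  exfalso.
  destruct (Hl2 x (HAK x Hx)) as [t [Ht Hb]].
  destruct (Hl1 t Ht) as [HPt Hrt].
  pose proof (lmin_le snd l t Ht) as Hmin.
  assert (Hsmall : forall y, In y (snd (fst t)) -> Rabs (pair D x y - pair D v y) < lmin snd l).
  { intros y Hy. destruct (Rlt_or_le (Rabs (pair D x y - pair D v y)) (lmin snd l)); auto.
    exfalso; apply H. exists y; split; auto. apply in_flat_map. exists t; auto. }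
  destruct HPt as [HA|HVn].
  - apply (HA x); auto. intros y Hy. specialize (Hb y Hy). lra.
  - apply (HVn v); auto. intros y Hy. specialize (Hb y Hy). specialize (Hsmall y Hy).
    replace (pair D v y - pair D (fst (fst t)) y) with
      (-(pair D x y - pair D v y) + (pair D x y - pair D (fst (fst t)) y)) by ring.
    eapply Rle_lt_trans; [apply Rabs_triang|]. rewrite Rabs_Ropp. lra.
Qed.

Lemma f_lb (f : X -> ereal) (K : X -> Prop) :
  (forall x, f x <> NInf) -> wlsc D f -> wcompact D K -> (forall x, dom f x -> K x) ->
  exists m, forall x, ele (Fin m) (f x).
Proof.
  intros Hn Hl HK HdK.
  destruct (HK nat (fun k x => ~ ele (f x) (Fin (- INR k)))) as [l Hlist].
  - intros k. apply (Hl (- INR k)).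
  - intros x _. destruct (f x) as [r| |] eqn:E.
    + destruct (nat_gt (- r)) as [k Hk]. exists k. simpl. lra.
    + exists O. simpl; auto.
    + exfalso; apply (Hn x E).
  - exists (- lmax INR l). intros x. destruct (f x) as [r| |] eqn:E.
    + assert (Hd : dom f x) by (unfold dom; rewrite E; discriminate).
      destruct (Hlist x (HdK x Hd)) as [k [Hk Hk2]]. rewrite E in Hk2. simpl in Hk2.
      pose proof (lmax_ge INR l k Hk). simpl. lra.
    + simpl; auto.
    + exfalso; apply (Hn x E).
Qed.
End Top.

Lemma sumn_sub n f g : sumn n f - sumn n g = sumn n (fun i => f i - g i).
Proof. induction n; simpl. ring. rewrite <- IHn. ring. Qed.
Lemma Eplus_NInf_r a : Eplus a NInf = NInf.
Proof. destruct a; reflexivity. Qed.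

Section Main.
Variables (X Y : VS) (D : Duality X Y).

Fixpoint lincomb (n : nat) (lam : nat -> R) (ys : list Y) : Y :=
  match n with O => vzero | S k => vadd (lincomb k lam ys) (vscal (lam k) (nth k ys vzero)) end.

Lemma pair_lincomb x n lam ys :
  pair D x (lincomb n lam ys) = sumn n (fun i => lam i * pair D x (nth i ys vzero)).
Proof. induction n; simpl. apply pair0r. rewrite pair_addr, pair_scalr, IHn. ring. Qed.

Definition G (f : X -> ereal) (V : X -> Prop) (y : Y) :=
  Eplus (conjugate D f y) (support D V (vopp y)).

Lemma conj_ub (f : X -> ereal) y x a : f x = Fin a -> ele (Fin (pair D x y - a)) (conjugate D f y).
Proof. intros H. apply Esup_ub. exists x. rewrite H. reflexivity. Qed.

Lemma conj_le (f : X -> ereal) y c : (forall x, f x <> NInf) ->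
  (forall x a, f x = Fin a -> pair D x y - a <= c) -> ele (conjugate D f y) (Fin c).
Proof.
  intros Hn H. apply Esup_least. intros e [x ->]. destruct (f x) as [r| |] eqn:E; simpl.
  - specialize (H x r E). unfold Rminus in H; lra.
  - auto.
  - exfalso; apply (Hn x E).
Qed.

Lemma supp_ub (V : X -> Prop) y x : V x -> ele (Fin (pair D x y)) (support D V y).
Proof. intros H. apply Esup_ub. exists x; auto. Qed.

Lemma supp_le (V : X -> Prop) y c : (forall x, V x -> pair D x y <= c) -> ele (support D V y) (Fin c).
Proof. intros H. apply Esup_least. intros e [x [Hx ->]]. simpl; auto. Qed.

Lemma conj_empty (f : X -> ereal) y : (forall x, ~ dom f x) -> conjugate D f y = NInf.
Proof.
  intros H. apply ele_antisym; [|apply ele_NInf]. apply Esup_least. intros e [x ->].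
  assert (E : f x = PInf) by (apply NNPP; apply H). rewrite E. simpl. auto.
Qed.

Lemma supp_empty (V : X -> Prop) y : (forall x, ~ V x) -> support D V y = NInf.
Proof.
  intros H. apply ele_antisym; [|apply ele_NInf]. apply Esup_least. intros e [x [Hx _]].
  exfalso; eapply H; eauto.
Qed.

Lemma closed_closure (C : X -> Prop) a : wclosed D C -> wclosure D C a -> C a.
Proof. intros Hc Hcl. apply NNPP; intros Hna. destruct (Hcl _ Hc Hna) as [z [H1 H2]]. auto. Qed.

Lemma dom_fin (f : X -> ereal) x : (forall x, f x <> NInf) -> dom f x -> exists a, f x = Fin a.
Proof. intros Hn Hd. destruct (f x) as [a| |] eqn:E; eauto. contradiction. exfalso; eapply Hn; eauto. Qed.

Lemma comb_dom (f : X -> ereal) x z a b t : (forall x, f x <> NInf) -> convex_fun f ->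
  f x = Fin a -> f z = Fin b -> 0 <= t <= 1 ->
  exists c, f (vadd (vscal t x) (vscal (1 - t) z)) = Fin c /\ c <= t * a + (1 - t) * b.
Proof.
  intros Hn Hcv Ha Hb Ht. specialize (Hcv x z t a b Ht Ha Hb).
  destruct (f (vadd (vscal t x) (vscal (1 - t) z))) as [c| |] eqn:E; simpl in Hcv.
  - eauto.
  - contradiction.
  - exfalso; eapply Hn; eauto.
Qed.

Lemma key (f : X -> ereal) (K V : X -> Prop) :
  (forall x, f x <> NInf) -> convex_fun f -> wlsc D f -> wcompact D K ->
  (forall x, dom f x -> K x) -> wclosed D V -> convex_set V ->
  ((exists x, V x /\ dom f x) \/ ~ (exists x, V x /\ wclosure D (dom f) x)) ->
  forall m, (forall x, ele (Fin m) (f x)) ->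
  forall al al', (forall x, V x -> ele (Fin al) (f x)) -> al' < al ->
  exists y, ele (G f V y) (Fin (- al')).
Proof.
  intros Hn Hcv Hl HK HdK HV HVc Hcond m Hm al al' Hal Hlt.
  destruct (classic (exists x, dom f x)) as [[x1 Hx1]|Hnd].
  2:{ exists vzero. unfold G. rewrite conj_empty; [simpl; auto|]. intros x Hx; apply Hnd; eauto. }
  destruct (classic (exists v, V v)) as [[v1 Hv1]|HnV].
  2:{ exists vzero. unfold G. rewrite (supp_empty V); [rewrite Eplus_NInf_r; simpl; auto|].
      intros x Hx; apply HnV; eauto. }
  destruct Hcond as [[x0 [Hx0V Hx0d]] | Hncl].
  - destruct (dom_fin f x0 Hn Hx0d) as [a0 Ha0].
    assert (Ha0a : al <= a0) by (specialize (Hal x0 Hx0V); rewrite Ha0 in Hal; exact Hal).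
    set (eta := (al - al')/2).
    destruct (gap X Y D K (fun x => ele (f x) (Fin (al' + eta))) V HK) as [ys [eps [Heps Hgap]]].
    + intros x Hx. apply HdK. unfold dom. intros E. rewrite E in Hx. exact Hx.
    + exact HV.
    + intros a _ Hcl HVa. apply closed_closure in Hcl; [| apply Hl]. specialize (Hal a HVa).
      destruct (f a); simpl in *; unfold eta in *; lra.
    + set (n := length ys). set (yi := fun i => nth i ys vzero).
      set (Sset := fun u : nat -> R => exists x v a s, f x = Fin a /\ V v /\ a - al' <= s /\
           (forall i, (i < n)%nat -> u i = pair D x (yi i) - pair D v (yi i)) /\ u n = s).
      destruct (gsep (S n) Sset (Rmin eps eta)) as [lam [delta [Hdelta Hsep]]].
      * apply Rmin_pos; auto. unfold eta; lra.
      * intros u w t Ht [x [v [a [s [Hxa [Hv [Has [Hu Hun]]]]]]]]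
                       [x' [v' [a' [s' [Hxa' [Hv' [Has' [Hw Hwn]]]]]]]].
        destruct (comb_dom f x x' a a' t Hn Hcv Hxa Hxa' Ht) as [c [Hc Hcle]].
        exists (vadd (vscal t x) (vscal (1-t) x')), (vadd (vscal t v) (vscal (1-t) v')),
               c, (t*s + (1-t)*s').
        repeat split.
        -- exact Hc.
        -- apply HVc; auto.
        -- nra.
        -- intros i Hi. unfold comb. rewrite Hu, Hw by exact Hi. rewrite !pair_addl, !pair_scall. ring.
        -- unfold comb. rewrite Hun, Hwn. reflexivity.
      * intros u [x [v [a [s [Hxa [Hv [Has [Hu Hun]]]]]]]].
        destruct (Rlt_or_le s eta) as [Hs|Hs].
        -- assert (HL : ele (f x) (Fin (al' + eta))) by (rewrite Hxa; simpl; lra).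
           destruct (Hgap x v HL Hv) as [y [Hy Hey]].
           destruct (In_nth ys y vzero Hy) as [i [Hi Hiy]].
           exists i. split; [lia|]. rewrite Hu by exact Hi. unfold yi; rewrite Hiy.
           eapply Rle_trans; [apply Rmin_l|exact Hey].
        -- exists n. split; [lia|]. rewrite Hun. rewrite Rabs_right by (unfold eta in *; lra).
           eapply Rle_trans; [apply Rmin_r|exact Hs].
      * set (s0 := a0 - al' + Rabs (a0 - al')).
        assert (Hs0 : 0 <= s0).
        { unfold s0. pose proof (Rle_abs (-(a0 - al'))) as H. rewrite Rabs_Ropp in H; lra. }
        assert (Hu0 : Sset (fun i => if Nat.eqb i n then s0 else 0)).
        { exists x0, x0, a0, s0. repeat split; auto.
          - unfold s0. pose proof (Rle_abs (a0 - al')). lra.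
          - intros i Hi. destruct (Nat.eqb_spec i n); [lia|]. ring.
          - rewrite Nat.eqb_refl. reflexivity. }
        pose proof (Hsep _ Hu0) as Hs. simpl in Hs. rewrite Nat.eqb_refl in Hs.
        rewrite sumn_zero in Hs.
        2:{ intros i Hi. destruct (Nat.eqb_spec i n); [lia|]. ring. }
        assert (Hlamn : lam n < 0) by nra.
        set (mu := - lam n).
        assert (Hmu : 0 < mu) by (unfold mu; lra).
        set (w := lincomb n (fun i => lam i / mu) ys).
        assert (Hstar : forall x a v, f x = Fin a -> V v -> pair D x w - a <= pair D v w - al').
        { intros x a v Hxa Hv.
          assert (Hu : Sset (fun i => if Nat.eqb i n then a - al' else pair D x (yi i) - pair D v (yi i))).
          { exists x, v, a, (a - al'). repeat split; auto.
            - lra.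
            - intros i Hi. destruct (Nat.eqb_spec i n); [lia|]. reflexivity.
            - rewrite Nat.eqb_refl. reflexivity. }
          pose proof (Hsep _ Hu) as Hs'. simpl in Hs'. rewrite Nat.eqb_refl in Hs'.
          rewrite (sumn_ext n _ (fun i => lam i * (pair D x (yi i) - pair D v (yi i)))) in Hs'.
          2:{ intros i Hi. destruct (Nat.eqb_spec i n); [lia|]. reflexivity. }
          assert (Hw : sumn n (fun i => lam i * (pair D x (yi i) - pair D v (yi i)))
                        = mu * (pair D x w - pair D v w)).
          { unfold w. rewrite !pair_lincomb, sumn_sub, <- sumn_scal. apply sumn_ext.
            intros i Hi. unfold yi. field. lra. }
          rewrite Hw in Hs'. fold mu in Hs'.
          assert (mu * (pair D x w - pair D v w - a + al') <= - delta) by (unfold mu in *; nra).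
          nra. }
        destruct (real_sup (fun r => exists x a, f x = Fin a /\ r = pair D x w - a)
                   (pair D x0 w - a0) (pair D x0 w - al')) as [sg [Hsg1 Hsg2]].
        { exists x0, a0; auto. }
        { intros r [x [a [Hxa ->]]]. apply Hstar; auto. }
        exists w. unfold G.
        apply ele_trans with (Eplus (Fin sg) (Fin (- sg - al'))).
        { apply Eplus_mono.
          - apply conj_le; auto. intros x a Hxa. apply Hsg1. eauto.
          - apply supp_le. intros v Hv. rewrite pair_oppr.
            assert (sg <= pair D v w - al') by (apply Hsg2; intros r [x [a [Hxa ->]]]; apply Hstar; auto).
            lra. }
        simpl. lra.
  - destruct (gap X Y D K (dom f) V HK HdK HV) as [ys [eps [Heps Hgap]]].
    { intros a _ Hcl HVa. apply Hncl. eauto. }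
    set (n := length ys). set (yi := fun i => nth i ys vzero).
    set (Sset := fun u : nat -> R => exists x v, dom f x /\ V v /\
          forall i, (i < n)%nat -> u i = pair D x (yi i) - pair D v (yi i)).
    destruct (gsep n Sset eps Heps) as [lam [delta [Hdelta Hsep]]].
    + intros u w t Ht [x [v [Hx [Hv Hu]]]] [x' [v' [Hx' [Hv' Hw]]]].
      destruct (dom_fin f x Hn Hx) as [a Ha]. destruct (dom_fin f x' Hn Hx') as [a' Ha'].
      destruct (comb_dom f x x' a a' t Hn Hcv Ha Ha' Ht) as [c [Hc _]].
      exists (vadd (vscal t x) (vscal (1-t) x')), (vadd (vscal t v) (vscal (1-t) v')).
      repeat split.
      * unfold dom; rewrite Hc; discriminate.
      * apply HVc; auto.
      * intros i Hi. unfold comb. rewrite Hu, Hw by exact Hi. rewrite !pair_addl, !pair_scall. ring.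
    + intros u [x [v [Hx [Hv Hu]]]]. destruct (Hgap x v Hx Hv) as [y [Hy Hey]].
      destruct (In_nth ys y vzero Hy) as [i [Hi Hiy]].
      exists i. split; [exact Hi|]. rewrite Hu by exact Hi. unfold yi; rewrite Hiy. exact Hey.
    + set (w := lincomb n lam ys).
      assert (Hstar : forall x v, dom f x -> V v -> pair D x w + delta <= pair D v w).
      { intros x v Hx Hv.
        assert (Hu : Sset (fun i => pair D x (yi i) - pair D v (yi i))) by (exists x, v; auto).
        specialize (Hsep _ Hu).
        assert (E : pair D x w - pair D v w = sumn n (fun i => lam i * (pair D x (yi i) - pair D v (yi i)))).
        { unfold w. rewrite !pair_lincomb, sumn_sub. apply sumn_ext; intros; unfold yi; ring. }
        lra. }
      destruct (real_sup (fun r => exists x, dom f x /\ r = pair D x w) (pair D x1 w) (pair D v1 w - delta))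
        as [sg [Hsg1 Hsg2]].
      { eauto. }
      { intros r [x [Hx ->]]. specialize (Hstar x v1 Hx Hv1). lra. }
      assert (Hsv : forall v, V v -> sg + delta <= pair D v w).
      { intros v Hv. assert (sg <= pair D v w - delta); [|lra]. apply Hsg2.
        intros r [x [Hx ->]]. specialize (Hstar x v Hx Hv). lra. }
      set (t := Rabs (al' - m) / delta).
      assert (Ht0 : 0 <= t).
      { unfold t. apply Rmult_le_pos. apply Rabs_pos. left; apply Rinv_0_lt_compat; auto. }
      assert (Htd : t * delta = Rabs (al' - m)) by (unfold t; field; lra).
      exists (vscal t w). unfold G.
      apply ele_trans with (Eplus (Fin (t * sg - m)) (Fin (- (t * sg) - t * delta))).
      { apply Eplus_mono.
        - apply conj_le; auto. intros x a Hxa. rewrite pair_scalr.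
          assert (pair D x w <= sg).
          { apply Hsg1. exists x; split; auto. unfold dom; rewrite Hxa; discriminate. }
          specialize (Hm x); rewrite Hxa in Hm; simpl in Hm. nra.
        - apply supp_le. intros v Hv. rewrite pair_oppr, pair_scalr. specialize (Hsv v Hv). nra. }
      simpl. pose proof (Rle_abs (al' - m)). lra.
Qed.
End Main.

Lemma L1 (X Y : VS) (D : Duality X Y) (f : X -> ereal) (K V : X -> Prop) :
  (forall x, f x <> NInf) -> convex_fun f -> wlsc D f -> wcompact D K ->
  (forall x, dom f x -> K x) -> wclosed D V -> convex_set V ->
  ((exists x, V x /\ dom f x) \/ ~ (exists x, V x /\ wclosure D (dom f) x)) ->
  inf_over V f = Eopp (inf_over (fun _ : Y => True) (G X Y D f V)) /\ inf_over V f <> NInf.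
Proof.
  intros Hn Hcv Hl HK HdK HV HVc Hcond.
  destruct (f_lb X Y D f K Hn Hl HK HdK) as [m Hm].
  assert (HFm : ele (Fin m) (inf_over V f)) by (apply Einf_greatest; intros e [x [_ ->]]; apply Hm).
  assert (HFx : forall x, V x -> ele (inf_over V f) (f x)) by (intros x Hx; apply Einf_lb; eauto).
  assert (Hweak : forall y, ele (Eopp (inf_over V f)) (G X Y D f V y)).
  { intros y. rewrite <- (Eopp_inv (G X Y D f V y)). apply ele_opp. apply Einf_greatest.
    intros e [x [Hx ->]]. destruct (f x) as [a| |] eqn:E.
    - rewrite <- (Eopp_inv (Fin a)). apply ele_opp. simpl Eopp.
      apply ele_trans with (Eplus (Fin (pair D x y - a)) (Fin (pair D x (vopp y)))).
      + rewrite pair_oppr. simpl. lra.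
      + apply Eplus_mono; [apply conj_ub; auto | apply supp_ub; auto].
    - apply ele_PInf.
    - exfalso; eapply Hn; eauto. }
  split; [| intros E; rewrite E in HFm; exact HFm].
  assert (Hk : forall u, (forall e, (exists y, True /\ e = G X Y D f V y) -> ele u e) ->
     forall al al', (forall x, V x -> ele (Fin al) (f x)) -> al' < al -> ele u (Fin (- al'))).
  { intros u Hu al al' Hal Hlt.
    destruct (key X Y D f K V Hn Hcv Hl HK HdK HV HVc Hcond m Hm al al' Hal Hlt) as [y Hy].
    eapply ele_trans; [apply Hu; exists y; split; auto | exact Hy]. }
  assert (Hfin : inf_over (fun _ : Y => True) (G X Y D f V) = Eopp (inf_over V f)).
  2:{ rewrite Hfin, Eopp_inv; reflexivity. }
  unfold inf_over at 1. apply Einf_unique. split.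
  - intros e [y [_ ->]]. apply Hweak.
  - intros u Hu. specialize (Hk u Hu).
    destruct (inf_over V f) as [phi| |] eqn:EF.
    + assert (Hal : forall x, V x -> ele (Fin phi) (f x)) by (intros; apply HFx; auto).
      destruct u as [r| |]; simpl; auto.
      * destruct (Rle_or_lt r (- phi)) as [|Hr]; auto.
        specialize (Hk phi (phi - (r + phi)/2) Hal ltac:(lra)). simpl in Hk. lra.
      * specialize (Hk phi (phi - 1) Hal ltac:(lra)). simpl in Hk. exact Hk.
    + destruct u as [r| |]; simpl; auto.
      * assert (Hal : forall x, V x -> ele (Fin (- r + 2)) (f x)).
        { intros x Hx. specialize (HFx x Hx). destruct (f x); simpl in *; auto; contradiction. }
        specialize (Hk (- r + 2) (- r + 1) Hal ltac:(lra)). simpl in Hk. lra.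
      * assert (Hal : forall x, V x -> ele (Fin 1) (f x)).
        { intros x Hx. specialize (HFx x Hx). destruct (f x); simpl in *; auto; contradiction. }
        specialize (Hk 1 0 Hal ltac:(lra)). simpl in Hk. exact Hk.
    + simpl in HFm. contradiction.
Qed.

Theorem mainTheorem17 (X Y : VS) (D : Duality X Y) (f : X -> ereal) (V : X -> Prop) :
  (forall x, f x <> NInf) ->
  convex_fun f ->
  wlsc D f ->
  (exists K, wcompact D K /\ forall x, dom f x -> K x) ->
  wclosed D V -> convex_set V ->
  ( ((exists x, V x /\ dom f x) \/ ~ (exists x, V x /\ wclosure D (dom f) x)) ->
      inf_over V f
        = Eopp (inf_over (fun _ : Y => True)
                  (fun y => Eplus (conjugate D f y) (support D V (vopp y))))
      /\ inf_over V f <> NInf )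
  /\
  ( (~ (exists x, V x /\ dom f x) /\ (exists x, V x /\ wclosure D (dom f) x)) ->
      forall W : X -> Prop, wclosed D W -> convex_set W ->
        (forall x, W x -> winterior D V x) ->
        inf_over W f
          = Eopp (inf_over (fun _ : Y => True)
                    (fun y => Eplus (conjugate D f y) (support D W (vopp y))))
        /\ inf_over W f = PInf ).
Proof.
  intros Hn Hcv Hl [K [HK HdK]] HV HVc. split.
  - intros Hcond. exact (L1 X Y D f K V Hn Hcv Hl HK HdK HV HVc Hcond).
  - intros [Hnd [x1 [Hx1V Hx1cl]]] W HW HWc HWi.
    assert (Hcond : ~ (exists x, W x /\ wclosure D (dom f) x)).
    { intros [x [HWx Hcl]]. destruct (HWi x HWx) as [U [HU [HUx HUV]]].
      destruct (Hcl U HU HUx) as [z [HUz Hdz]]. apply Hnd. exists z; split; auto. }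
    destruct (L1 X Y D f K W Hn Hcv Hl HK HdK HW HWc (or_intror Hcond)) as [H1 _].
    split; [exact H1|].
    apply Einf_unique. split.
    + intros e [x [Hx ->]].
      assert (E : f x = PInf).
      { apply NNPP; intro Hd; apply Hnd; exists x; split; [|exact Hd].
        destruct (HWi x Hx) as [U [_ [HUx HUV]]]; auto. }
      rewrite E; apply ele_refl.
    + intros u _; apply ele_PInf.
Qed.
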